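(* Let $\boldsymbol{\pi}\sim SP(\boldsymbol{\mu},\boldsymbol{\omega},\boldsymbol{\sigma},\psi,p_\text{b})$, where $p_\text{b}(\boldsymbol{\pi})>0$ for every partition $\boldsymbol{\pi}$ of $\{1,\dots,n\}$. Let $\boldsymbol{\omega}=\omega\times(s_1,\dots,s_n)$ with each $s_i\in\{0,1\}$, and let $\psi\in(0,1)$. Let $a=n-\sum_{i=1}^n s_i$ be the number of items with shrinkage equal to zero. Let $b$ be the number of clusters of $\boldsymbol{\mu}$ containing at least one item $i$ with $s_i=1$. Then, as $\omega\to\infty$, the number of limiting partitions of this SP distribution equals $B(a,b)$.
   Context: Partitions of $\{1,\dots,n\}$ are encoded as vectors of cluster labels $\boldsymbol{\pi}=(\pi_1,\dots,\pi_n)$ in canonical form: item 1 gets label 1, and each subsequent item that is not clustered with an earlier item gets the next unused integer. Two items share a label iff they are in the same cluster. Shrinkage partition (SP) distribution. The ingredients are: - an anchor partition $\boldsymbol{\mu}=(\mu_1,\dots,\mu_n)$; - a shrinkage vector $\boldsymbol{\omega}=(\omega_1,\dots,\omega_n)$ with $\omega_i\ge0$; - a permutation $\boldsymbol{\sigma}$ of $\{1,\dots,n\}$, giving the allocation order (the $k$-th item allocated is $\sigma_k$); - a grit parameter $\psi\in\mathbb{R}$; - a baseline partition distribution $p_\text{b}$ given by a conditional allocation probability function $\Pr_\text{b}(\pi_{\sigma_k}=c\mid\pi_{\sigma_1},\dots,\pi_{\sigma_{k-1}})$, so that $p_\text{b}(\boldsymbol{\pi})=\prod_k\Pr_\text{b}(\pi_{\sigma_k}\mid\cdot)$.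 At step $k\ge2$, the admissible values of $c$ are the existing labels $\{\pi_{\sigma_1},\dots,\pi_{\sigma_{k-1}}\}$ and the new label $|\{\pi_{\sigma_1},\dots,\pi_{\sigma_{k-1}}\}|+1$. The anchor factor is $$\Pr_\text{a}(\pi_{\sigma_k}=c\mid\cdot)\propto\exp\!\Big(\frac{\omega_{\sigma_k}}{(k-1)^2}\Big[\Big(\sum_{j=1}^{k-1}\omega_{\sigma_j}I\{\pi_{\sigma_j}=c\}I\{\mu_{\sigma_j}=\mu_{\sigma_k}\}\Big)^2-\psi\Big(\sum_{j=1}^{k-1}\omega_{\sigma_j}I\{\pi_{\sigma_j}=c\}\Big)^2\Big]\Big).$$ The SP allocation probability is $\Pr_\text{sp}(\pi_{\sigma_k}=c\mid\cdot)\propto\Pr_\text{b}(\pi_{\sigma_k}=c\mid\cdot)\Pr_\text{a}(\pi_{\sigma_k}=c\mid\cdot)$, normalized over the admissible $c$. The first item gets label 1. The pmf is $\prod_{k=2}^n\Pr_\text{sp}(\pi_{\sigma_k}\mid\cdot)$, and this distribution is denoted $SP(\boldsymbol{\mu},\boldsymbol{\omega},\boldsymbol{\sigma},\psi,p_\text{b})$. Limiting partition: for $\boldsymbol{\omega}=\omega\times(s_1,\dots,s_n)$ with fixed scalars $s_i$, a partition is a limiting partition if its probability has a non-zero limit as $\omega\to\infty$. Extended Bell numbers: $B(a,b)$ for nonnegative integers $a,b$ is defined by $B(0,b)=1$ and $B(a+1,b)=b\,B(a,b)+B(a,b+1)$. Equivalently, $B(a,b)$ is the number of ways to allocate $a$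 items among $b$ already-existing clusters, allowing new clusters to be formed; $B(a,0)$ is the $a$-th Bell number. *)

(* Defs.v *)
From HB Require Import structures.
From mathcomp Require Import all_boot all_order all_algebra all_fingroup.
From mathcomp Require Import all_classical all_reals all_analysis.
Set Implicit Arguments. Unset Strict Implicit. Unset Printing Implicit Defensive.
Import Order.TTheory GRing.Theory Num.Theory.
Import numFieldNormedType.Exports.
Local Open Scope classical_set_scope.
Local Open Scope ring_scope.

(* Conventions: items are 'I_n = {0,...,n-1} (item i+1 of the paper is i);
   labels are 0-based (label c+1 of the paper is c).  A partition is a
   label vector p : {ffun 'I_n -> 'I_n} in canonical form. *)

Definition prev_labels n (p : {ffun 'I_n -> 'I_n}) (i : 'I_n) : seq 'I_n :=
  [seq p j | j : 'I_n <- enum 'I_n & (val j < val i)%N].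

Definition canon_part n (p : {ffun 'I_n -> 'I_n}) : bool :=
  [forall i : 'I_n, (p i \in prev_labels p i)
                    || (val (p i) == size (undup (prev_labels p i)))].

Definition alloc_seq n (p : {ffun 'I_n -> 'I_n}) (sigma : {perm 'I_n}) : seq 'I_n :=
  [seq p (sigma k) | k <- enum 'I_n].

(* label of the k-th allocated item when the partition is labelled
   canonically in allocation order (0-based): the number of distinct
   clusters seen before the first occurrence of its cluster *)
Definition alloc_label n (p : {ffun 'I_n -> 'I_n}) (sigma : {perm 'I_n}) (k : 'I_n) : nat :=
  let s := alloc_seq p sigma in
  size (undup (take (index (p (sigma k)) s) s)).

Definition alloc_prefix n (p : {ffun 'I_n -> 'I_n}) (sigma : {perm 'I_n}) (k : 'I_n) : seq nat :=
  [seq alloc_label p sigma j | j : 'I_n <- enum 'I_n & (val j < val k)%N].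

(* number of existing clusters at step k; admissible labels are 0..m *)
Definition n_existing n (p : {ffun 'I_n -> 'I_n}) (sigma : {perm 'I_n}) (k : 'I_n) : nat :=
  size (undup (alloc_prefix p sigma k)).

Section SP.
Variable R : realType.

(* A baseline partition distribution is given by its conditional allocation
   probabilities: prb k prefix c = Pr_b(label of sigma_k = c | labels of
   sigma_0..sigma_(k-1) = prefix). *)
Definition baseline_pmf n (prb : nat -> seq nat -> nat -> R) (sigma : {perm 'I_n})
  (p : {ffun 'I_n -> 'I_n}) : R :=
  \prod_(k : 'I_n | (0 < k)%N) prb k (alloc_prefix p sigma k) (alloc_label p sigma k).

(* anchor factor (unnormalized) for step k (0-based, so k = (paper's k) - 1) *)
Definition anchor_factor n (mu : {ffun 'I_n -> 'I_n}) (w : 'I_n -> R)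
  (sigma : {perm 'I_n}) (psi : R) (p : {ffun 'I_n -> 'I_n}) (k : 'I_n) (c : nat) : R :=
  expR (w (sigma k) / (k%:R ^+ 2) *
    ((\sum_(j : 'I_n | (j < k)%N)
        w (sigma j) * ((alloc_label p sigma j == c) && (mu (sigma j) == mu (sigma k)))%:R) ^+ 2
     - psi * (\sum_(j : 'I_n | (j < k)%N)
        w (sigma j) * (alloc_label p sigma j == c)%:R) ^+ 2)).

Definition sp_cond n (mu : {ffun 'I_n -> 'I_n}) (w : 'I_n -> R) (sigma : {perm 'I_n})
  (psi : R) (prb : nat -> seq nat -> nat -> R) (p : {ffun 'I_n -> 'I_n}) (k : 'I_n) (c : nat) : R :=
  prb k (alloc_prefix p sigma k) c * anchor_factor mu w sigma psi p k c /
  \sum_(c' < (n_existing p sigma k).+1)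
     prb k (alloc_prefix p sigma k) c' * anchor_factor mu w sigma psi p k c'.

Definition sp_pmf n (mu : {ffun 'I_n -> 'I_n}) (w : 'I_n -> R) (sigma : {perm 'I_n})
  (psi : R) (prb : nat -> seq nat -> nat -> R) (p : {ffun 'I_n -> 'I_n}) : R :=
  \prod_(k : 'I_n | (0 < k)%N) sp_cond mu w sigma psi prb p k (alloc_label p sigma k).

Definition valid_baseline n (prb : nat -> seq nat -> nat -> R) (sigma : {perm 'I_n}) : Prop :=
  forall p : {ffun 'I_n -> 'I_n}, canon_part p -> forall k : 'I_n, (0 < k)%N ->
    (forall c, (c <= n_existing p sigma k)%N -> 0 <= prb k (alloc_prefix p sigma k) c) /\
    \sum_(c < (n_existing p sigma k).+1) prb k (alloc_prefix p sigma k) c = 1.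

Definition limiting n (mu : {ffun 'I_n -> 'I_n}) (s : 'I_n -> bool) (sigma : {perm 'I_n})
  (psi : R) (prb : nat -> seq nat -> nat -> R) (p : {ffun 'I_n -> 'I_n}) : Prop :=
  exists l : R, l != 0 /\
    sp_pmf mu (fun i => om * (s i)%:R) sigma psi prb p @[om --> +oo] --> l.

End SP.

Fixpoint ext_bell (a b : nat) : nat :=
  match a with
  | 0 => 1
  | a'.+1 => b * ext_bell a' b + ext_bell a' b.+1
  end%N.

(* Main.v *)
Require Import Defs.
From HB Require Import structures.
From mathcomp Require Import all_boot all_order all_algebra all_fingroup.
From mathcomp Require Import all_classical all_reals all_analysis.
From mathcomp Require Import ring lra.
Import Order.TTheory GRing.Theory Num.Theory.

Set Implicit Arguments. Unset Strict Implicit. Unset Printing Implicit Defensive.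

Section Lab.
Variable T : eqType.
Definition lab (S : seq T) (x : T) : nat := size (undup (take (index x S) S)).

Lemma undup_size_mono (s t : seq T) : {subset s <= t} -> size (undup s) <= size (undup t).
Proof.
move=> st; apply: uniq_leq_size; first exact: undup_uniq.
by move=> x; rewrite !mem_undup => /st.
Qed.

Lemma undup_size_lt (s t : seq T) x : {subset s <= t} -> x \in t -> x \notin s ->
  size (undup s) < size (undup t).
Proof.
move=> st xt xs; have := @uniq_leq_size _ (x :: undup s) (undup t).
apply => /=; first by rewrite mem_undup xs undup_uniq.
by move=> y; rewrite inE !mem_undup => /orP[/eqP->|/st].
Qed.

Lemma lab_lt (S : seq T) x y : x \in S -> y \in S -> index x S < index y S -> lab S x < lab S y.
Proof.
move=> xS yS lt; rewrite /lab; apply: (@undup_size_lt _ _ x).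
- move=> z; rewrite -(take_takel _ (ltnW lt)); exact: mem_take.
- by rewrite in_take.
- by rewrite in_take // ltnn.
Qed.

Lemma lab_inj (S : seq T) x y : x \in S -> y \in S -> (lab S x == lab S y) = (x == y).
Proof.
move=> xS yS; case: (ltngtP (index x S) (index y S)) => h.
- by rewrite ltn_eqF ?lab_lt //; apply/esym/negbTE; apply/eqP=> e; move: h; rewrite e ltnn.
- by rewrite gtn_eqF ?lab_lt //; apply/esym/negbTE; apply/eqP=> e; move: h; rewrite e ltnn.
- by rewrite -(nth_index x xS) h (nth_index x yS) !eqxx.
Qed.

Lemma lab_take (S : seq T) m x : x \in take m S -> lab S x = lab (take m S) x.
Proof.
move=> xt; have xS := mem_take xt.
have ht : index x S < m by rewrite -in_take.
have e : index x (take m S) = index x S.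
  by rewrite -[in RHS](cat_take_drop m S) index_cat xt.
by rewrite /lab e take_takel // ltnW.
Qed.

Lemma lab_le_take (S : seq T) m x : index x S <= m -> lab S x <= size (undup (take m S)).
Proof.
move=> h; apply: undup_size_mono => z; rewrite -(take_takel _ h).
exact: mem_take.
Qed.

Lemma lab_lt_take (S : seq T) m x : x \in take m S -> lab S x < size (undup (take m S)).
Proof.
move=> xt; have xS := mem_take xt.
apply: (@undup_size_lt _ _ x) => //.
- have hx : index x S < m by rewrite -in_take.
  move=> z; rewrite -(take_takel _ (ltnW hx)); exact: mem_take.
- by rewrite in_take // ltnn.
Qed.
End Lab.

Section Kern.
Variables (A B C : eqType) (f : A -> B) (g : A -> C).

Lemma kern_index (t : seq A) x : {in t &, forall a b, (f a == f b) = (g a == g b)} ->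
  x \in t -> index (f x) (map f t) = index (g x) (map g t).
Proof.
elim: t => //= a t IH K; rewrite inE => /orP[/eqP->|xt]; first by rewrite !eqxx.
rewrite (K a x) ?inE ?eqxx ?xt ?orbT // IH // => u v ut vt.
by apply: K; rewrite inE ?ut ?vt orbT.
Qed.

Lemma kern_size_undup (t : seq A) : {in t &, forall a b, (f a == f b) = (g a == g b)} ->
  size (undup (map f t)) = size (undup (map g t)).
Proof.
elim: t => //= a t IH K.
have K' : {in t &, forall a b, (f a == f b) = (g a == g b)}.
  by move=> u v ut vt; apply: K; rewrite inE ?ut ?vt orbT.
have -> : (f a \in map f t) = (g a \in map g t).
  apply/mapP/mapP => -[y yt e]; exists y => //; apply/eqP.
    by rewrite -K ?inE ?eqxx ?yt ?orbT // e.
  by rewrite K ?inE ?eqxx ?yt ?orbT // e.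
by case: ifP => _ /=; rewrite IH.
Qed.

Lemma kern_lab (t : seq A) x : {in t &, forall a b, (f a == f b) = (g a == g b)} ->
  x \in t -> lab (map f t) (f x) = lab (map g t) (g x).
Proof.
move=> K xt; rewrite /lab (kern_index K xt) -!map_take.
apply: kern_size_undup => u v /mem_take ut /mem_take vt; exact: K.
Qed.
End Kern.

Lemma mem_take_enum n m (j : 'I_n) : (j \in take m (enum 'I_n)) = (j < m).
Proof. by rewrite in_take ?mem_enum // index_enum_ord. Qed.

Lemma undup_size_eqi (T : eqType) (s t : seq T) : s =i t -> size (undup s) = size (undup t).
Proof.
move=> e; apply/eqP; rewrite eqn_leq !undup_size_mono // => x; by rewrite e.
Qed.

Section G.
Variables (n : nat) (T : eqType) (f : 'I_n -> T).
Let F := map f (enum 'I_n).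

Lemma G_in j : f j \in F.
Proof. by apply: map_f; rewrite mem_enum. Qed.

Lemma G_size m : size (undup (take m F)) = size (undup (map f [seq j <- enum 'I_n | (val j < m)%N])).
Proof.
apply: undup_size_eqi => x; rewrite /F -map_take.
apply/mapP/mapP => -[j jin ->]; exists j => //.
  by rewrite mem_filter mem_enum andbT -mem_take_enum.
by rewrite mem_take_enum; move: jin; rewrite mem_filter => /andP[].
Qed.

Lemma G_intake m (j : 'I_n) : j < m -> f j \in take m F.
Proof. by move=> h; rewrite /F -map_take; apply: map_f; rewrite mem_take_enum. Qed.

Lemma G_idx k : index (f k) F <= k.
Proof. by rewrite -ltnS -in_take ?G_in // G_intake. Qed.

Lemma G_le (k : 'I_n) : lab F (f k) <= size (undup (take k F)).
Proof. exact/lab_le_take/G_idx. Qed.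

Lemma G_lt (j k : 'I_n) : j < k -> lab F (f j) < size (undup (take k F)).
Proof. by move=> h; apply/lab_lt_take/G_intake. Qed.

Lemma G_new (k : 'I_n) : (forall j : 'I_n, j < k -> f j != f k) ->
  lab F (f k) = size (undup (take k F)).
Proof.
move=> h; rewrite /lab; suff -> : index (f k) F = k by [].
apply/eqP; rewrite eqn_leq G_idx /= leqNgt -in_take ?G_in //.
rewrite /F -map_take; apply/mapP => -[j]; rewrite mem_take_enum => jk e.
by move: (h j jk); rewrite e eqxx.
Qed.

Lemma G_eq j k : (lab F (f j) == lab F (f k)) = (f j == f k).
Proof. by rewrite lab_inj ?G_in. Qed.
End G.

Lemma G_pre n (T1 T2 : eqType) (f : 'I_n -> T1) (g : 'I_n -> T2) (k j : 'I_n) :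
  (forall a b : 'I_n, a < k -> b < k -> (f a == f b) = (g a == g b)) -> j < k ->
  lab (map f (enum 'I_n)) (f j) = lab (map g (enum 'I_n)) (g j).
Proof.
move=> K jk; rewrite (lab_take (m := k)) ?G_intake // (lab_take (S := map g _) (m := k)) ?G_intake //.
have e (T : eqType) (h : 'I_n -> T) : take k (map h (enum 'I_n)) = map h (take k (enum 'I_n)) by rewrite map_take.
rewrite !e; apply: (kern_lab (t := take k (enum 'I_n))); last by rewrite mem_take_enum.
move=> a b ha hb; apply: K; by rewrite -mem_take_enum.
Qed.

Section Alloc.
Variables (n : nat) (p : {ffun 'I_n -> 'I_n}) (sigma : {perm 'I_n}).
Let P := fun k : 'I_n => p (sigma k).

Lemma AL_eq j k : (alloc_label p sigma j == alloc_label p sigma k) = (p (sigma j) == p (sigma k)).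
Proof. exact: (G_eq P). Qed.

Lemma NE_eq k : n_existing p sigma k = size (undup (take k (alloc_seq p sigma))).
Proof.
rewrite /n_existing /alloc_prefix (G_size P).
apply: kern_size_undup => a b _ _; exact: AL_eq.
Qed.

Lemma AL_le k : alloc_label p sigma k <= n_existing p sigma k.
Proof. by rewrite NE_eq; apply: (G_le P). Qed.

Lemma AL_lt (j k : 'I_n) : j < k -> alloc_label p sigma j < n_existing p sigma k.
Proof. by rewrite NE_eq; apply: (G_lt P). Qed.

Lemma AL_new (k : 'I_n) : (forall j : 'I_n, j < k -> p (sigma j) != p (sigma k)) ->
  alloc_label p sigma k = n_existing p sigma k.
Proof. by move=> h; rewrite NE_eq; apply: (G_new (f := P)). Qed.
End Alloc.

Lemma AL_pre n (p p' : {ffun 'I_n -> 'I_n}) (sigma : {perm 'I_n}) (k j : 'I_n) :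
  (forall a b : 'I_n, a < k -> b < k ->
     (p (sigma a) == p (sigma b)) = (p' (sigma a) == p' (sigma b))) -> j < k ->
  alloc_label p sigma j = alloc_label p' sigma j.
Proof. exact: (G_pre (f := fun k => p (sigma k)) (g := fun k => p' (sigma k))). Qed.

Lemma AP_pre n (p p' : {ffun 'I_n -> 'I_n}) (sigma : {perm 'I_n}) (k : 'I_n) :
  (forall a b : 'I_n, a < k -> b < k ->
     (p (sigma a) == p (sigma b)) = (p' (sigma a) == p' (sigma b))) ->
  alloc_prefix p sigma k = alloc_prefix p' sigma k.
Proof.
move=> K; apply/eq_in_map => j; rewrite mem_filter => /andP[jk _].
exact: (AL_pre K jk).
Qed.

Lemma canonize_lt n (q : 'I_n -> nat) (i : 'I_n) : lab (map q (enum 'I_n)) (q i) < n.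
Proof.
apply: leq_ltn_trans (G_le q i) _.
apply: leq_ltn_trans (size_undup _) _; rewrite size_take size_map size_enum_ord.
by rewrite ltn_ord.
Qed.

Definition canonize n (q : 'I_n -> nat) : {ffun 'I_n -> 'I_n} :=
  [ffun i => Ordinal (canonize_lt q i)].

Lemma canon_kern n (q : 'I_n -> nat) x y : (canonize q x == canonize q y) = (q x == q y).
Proof. by rewrite !ffunE -val_eqE /= G_eq. Qed.

Lemma canon_part_canon n (q : 'I_n -> nat) : canon_part (canonize q).
Proof.
apply/forallP => i; case: (pickP (fun j : 'I_n => (j < i) && (q j == q i))).
  move=> j /andP[ji /eqP e]; apply/orP; left; apply/mapP; exists j.
    by rewrite mem_filter ji mem_enum.
  by apply/eqP; rewrite canon_kern e.
move=> h; apply/orP; right.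
rewrite ffunE /= (G_new (f := q)); last first.
  move=> j ji; apply/negP => /eqP e; move: (h j); by rewrite ji e eqxx.
rewrite G_size /prev_labels; apply/eqP.
apply: kern_size_undup => a b _ _; by rewrite canon_kern.
Qed.

Lemma canon_uniq n (p p' : {ffun 'I_n -> 'I_n}) : canon_part p -> canon_part p' ->
  (forall x y, (p x == p y) = (p' x == p' y)) -> p = p'.
Proof.
move=> /forallP cp /forallP cp' K; apply/ffunP.
suff H : forall m (i : 'I_n), i < m -> p i = p' i by move=> i; apply: (H n).
elim=> // m IH i im.
have IHi : forall j : 'I_n, j < i -> p j = p' j.
  by move=> j ji; apply: IH; apply: leq_trans ji _.
have prevE : prev_labels p i = prev_labels p' i.
  by apply/eq_in_map => j; rewrite mem_filter => /andP[ji _]; apply: IHi.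
case: (boolP (p i \in prev_labels p i)) => [/mapP[j]|ni].
  rewrite mem_filter => /andP[ji _] e.
  have /eqP e' : p' i == p' j by rewrite -K e.
  by rewrite e e' IHi.
have /eqP e : val (p i) == size (undup (prev_labels p i)) by move: (cp i); rewrite (negbTE ni).
case: (boolP (p' i \in prev_labels p' i)) => [/mapP[j]|ni'].
  rewrite mem_filter => /andP[ji _] e'.
  have /eqP e2 : p i == p j by rewrite K e'.
  case/negP: ni; rewrite e2; apply/mapP; exists j => //; by rewrite mem_filter ji mem_enum.
have /eqP e' : val (p' i) == size (undup (prev_labels p' i)) by move: (cp' i); rewrite (negbTE ni').
by apply: val_inj; rewrite e e' prevE.
Qed.

Lemma card_decomp (T : finType) (A : {set T}) (I : eqType) (M : seq I) (B : I -> {set T}) :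
  uniq M -> (forall m, m \in M -> B m \subset A) ->
  (forall m1 m2 x, m1 \in M -> m2 \in M -> m1 != m2 -> x \in B m1 -> x \in B m2 -> False) ->
  (forall x, x \in A -> exists2 m, m \in M & x \in B m) ->
  #|A| = \sum_(m <- M) #|B m|.
Proof.
move=> uM sub disj cov.
rewrite -sum1_card.
transitivity (\sum_(x in A) \sum_(m <- M) (x \in B m : nat)).
  apply: eq_bigr => x xA; have [m0 m0M xB0] := cov x xA.
  rewrite (bigD1_seq m0) //= xB0 big1_seq // => m /andP[ne mM].
  case xB: (x \in B m) => //; exfalso; exact: (disj m m0 x).
rewrite exchange_big /=; apply: eq_big_seq => m mM.
rewrite -sum1_card big_mkcond [RHS]big_mkcond; apply: eq_bigr => x _.
case xB: (x \in B m); first by rewrite (fintype.subsetP (sub m mM) x xB).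
by case: (x \in A).
Qed.

Definition CC n (mu : 'I_n -> nat) (s : 'I_n -> bool) (p : {ffun 'I_n -> 'I_n}) : bool :=
  [forall x, forall y, s x ==> s y ==> ((p x == p y) == (mu x == mu y))].

Lemma CCP n (mu : 'I_n -> nat) (s : 'I_n -> bool) (p : {ffun 'I_n -> 'I_n}) :
  reflect (forall x y, s x -> s y -> (p x == p y) = (mu x == mu y)) (CC mu s p).
Proof.
apply: (iffP forallP) => [h x y sx sy|h x]; first by move: (h x) => /forallP/(_ y); rewrite sx sy => /eqP.
by apply/forallP => y; apply/implyP => sx; apply/implyP => sy; rewrite h.
Qed.

Definition Cset n (mu : 'I_n -> nat) (s : 'I_n -> bool) : {set {ffun 'I_n -> 'I_n}} :=
  [set p | canon_part p && CC mu s p].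

Definition cls n (mu : 'I_n -> nat) (s : 'I_n -> bool) : seq nat :=
  [seq mu i | i <- enum 'I_n & s i].

Lemma count_base n (mu : 'I_n -> nat) (s : 'I_n -> bool) : (forall i, s i) -> #|Cset mu s| = 1.
Proof.
move=> hs; suff -> : Cset mu s = [set canonize mu] by rewrite cards1.
apply/setP => p; rewrite !inE; apply/idP/eqP.
  case/andP => cp /CCP C; apply: canon_uniq => // [|x y]; first exact: canon_part_canon.
  by rewrite C ?hs // canon_kern.
move=> ->; rewrite canon_part_canon /=; apply/CCP => x y _ _; exact: canon_kern.
Qed.

Theorem count_main a : forall n (mu : 'I_n -> nat) (s : 'I_n -> bool), #|[set i | ~~ s i]| = a ->
  #|Cset mu s| = ext_bell a (size (undup (cls mu s))).
Proof.
elim: a => [|a IH] n mu s ha.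
  rewrite count_base //= => i; apply/negPn/negP => si.
  by move: ha => /eqP; rewrite cards_eq0 => /eqP/setP/(_ i); rewrite !inE si.
have [z] : exists z, z \in [set i | ~~ s i] by apply/card_gt0P; rewrite ha.
rewrite inE => sz.
set L := cls mu s.
set fresh := (\sum_(i < n) mu i).+1.
have fL : fresh \notin L.
  apply/mapP => -[i _ e].
  have : mu i < fresh by rewrite /fresh ltnS (bigD1 i) //= leq_addr.
  by rewrite -e ltnn.
pose s' := fun i => s i || (i == z).
pose mum := fun (m : nat) i => if i == z then m else mu i.
pose B := fun m => Cset (mum m) s'.
have ha' : #|[set i | ~~ s' i]| = a.
  have : [set i | ~~ s' i] = [set i | ~~ s i] :\ z.
    by apply/setP => i; rewrite !inE /s' negb_or andbC.
  move=> ->; move: ha; rewrite (cardsD1 z) inE sz add1n => -[].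
  done.
have hB : forall m, #|B m| = ext_bell a (if m \in L then size (undup L) else (size (undup L)).+1).
  move=> m; rewrite /B IH //.
  congr ext_bell.
  have -> : size (undup (cls (mum m) s')) = size (undup (m :: L)).
    apply: undup_size_eqi => v; rewrite inE; apply/mapP/orP.
      case=> i; rewrite mem_filter mem_enum andbT /s' /mum => /orP[si|/eqP->]; last by rewrite eqxx => ->; left.
      have iz : (i == z) = false by apply/negP => /eqP e; move: sz; rewrite -e si.
      rewrite iz => ->; right; apply: map_f; by rewrite mem_filter si mem_enum.
    case=> [/eqP->|/mapP[i]]; first by exists z; [rewrite mem_filter mem_enum andbT /s' eqxx orbT | rewrite /mum eqxx].
    rewrite mem_filter mem_enum andbT => si ->.
    have iz : (i == z) = false by apply/negP => /eqP e; move: sz; rewrite -e si.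
    exists i; first by rewrite mem_filter mem_enum /s' si.
    by rewrite /mum iz.
  by rewrite /= -mem_undup; case: (m \in undup L).
have sz' : s' z by rewrite /s' eqxx orbT.
have nz : forall i, s i -> (i == z) = false.
  by move=> i si; apply/negP => /eqP e; move: sz; rewrite -e si.
have s'E : forall i, s i -> s' i by move=> i si; rewrite /s' si.
have s'E2 : forall i, (i == z) = false -> s' i -> s i by move=> i iz; rewrite /s' iz orbF.
have D : forall m1 m2 p, m1 \in L -> m1 != m2 -> p \in B m1 -> p \in B m2 -> False.
  move=> m1 m2 p /mapP[i]; rewrite mem_filter mem_enum andbT => si e12 ne.
  rewrite !inE => /andP[_ /CCP C1] /andP[_ /CCP C2].
  have := C1 z i sz' (s'E i si); rewrite (C2 z i sz' (s'E i si)) /mum eqxx nz // -e12.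
  by rewrite eq_sym (negbTE ne) eqxx.
pose M := fresh :: undup L.
have uM : uniq M by rewrite /M /= mem_undup fL undup_uniq.
rewrite (@card_decomp _ _ _ M B uM).
- rewrite big_cons hB (negbTE fL) (eq_big_seq (fun=> ext_bell a (size (undup L)))); last first.
    by move=> m; rewrite mem_undup => mL; rewrite hB mL.
  rewrite big_const_seq count_predT iter_addn_0 /=.
  by rewrite addnC mulnC.
- move=> m _; apply/fintype.subsetP => p; rewrite !inE => /andP[cp /CCP C]; rewrite cp /=.
  apply/CCP => x y sx sy; rewrite C ?s'E // /mum !nz //.
- move=> m1 m2 p h1 h2 ne pb1 pb2; rewrite !inE in h1 h2.
  case m1L: (m1 \in L); first exact: (D m1 m2 p).
  have e1 : m1 = fresh by move: h1; rewrite mem_undup m1L orbF => /eqP.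
  have m2L : m2 \in L.
    move: h2 => /orP[/eqP e2|]; last by rewrite mem_undup.
    by move: ne; rewrite e1 e2 eqxx.
  by apply: (D m2 m1 p) => //; rewrite eq_sym.
- move=> p; rewrite inE => /andP[cp /CCP C].
  have toB : forall m, (forall y, s y -> (p z == p y) = (m == mu y)) -> p \in B m.
    move=> m hz; rewrite inE cp /=; apply/CCP => x y sx' sy'; rewrite /mum.
    case xz: (x == z); case yz: (y == z).
    + by rewrite (eqP xz) (eqP yz) !eqxx.
    + by rewrite (eqP xz) hz // s'E2.
    + by rewrite (eqP yz) [p x == _]eq_sym [mu x == _]eq_sym hz // s'E2.
    + by rewrite C // s'E2.
  case: (pickP (fun y => s y && (p y == p z))) => [y /andP[sy pyz]|none].
    exists (mu y); first by rewrite inE mem_undup; apply/orP; right; apply: map_f; rewrite mem_filter sy mem_enum.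
    apply: toB => y' sy'; by rewrite -(eqP pyz) C.
  exists fresh; first by rewrite inE eqxx.
  apply: toB => y' sy'.
  have : (s y' && (p y' == p z)) = false by apply: none.
  rewrite sy' /= eq_sym => ->; apply/esym/negbTE; apply: contra fL => /eqP ->.
  by apply: map_f; rewrite mem_filter sy' mem_enum.
Qed.

Section An.
Import numFieldNormedType.Exports.
Local Open Scope classical_set_scope.
Local Open Scope ring_scope.
Variable R : realType.

Lemma cvg_prodR (I : Type) (r : seq I) (P : pred I) (f : I -> R -> R) (l : I -> R) :
  (forall i, P i -> f i x @[x --> +oo] --> l i) ->
  \prod_(i <- r | P i) f i x @[x --> +oo] --> \prod_(i <- r | P i) l i.
Proof.
move=> h; elim: r => [|i r IH].
  rewrite big_nil; under eq_cvg do rewrite big_nil; exact: cvg_cst.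
rewrite big_cons; under eq_cvg do rewrite big_cons.
case: ifPn => // Pi; exact: cvgM (h i Pi) IH.
Qed.

Lemma cvg_sumR (I : Type) (r : seq I) (P : pred I) (f : I -> R -> R) (l : I -> R) :
  (forall i, P i -> f i x @[x --> +oo] --> l i) ->
  \sum_(i <- r | P i) f i x @[x --> +oo] --> \sum_(i <- r | P i) l i.
Proof.
move=> h; elim: r => [|i r IH].
  rewrite big_nil; under eq_cvg do rewrite big_nil; exact: cvg_cst.
rewrite big_cons; under eq_cvg do rewrite big_cons.
case: ifPn => // Pi; exact: cvgD (h i Pi) IH.
Qed.

Lemma exp_decay (d : R) : d < 0 -> expR (x ^+ 3 * d) @[x --> +oo] --> 0.
Proof.
move=> d0; apply/cvgrPdist_le => e e0.
near=> x.
rewrite sub0r normrN ger0_norm; last exact: expR_ge0.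
have x1 : 1 <= x by near: x; apply: nbhs_pinfty_ge; exact: num_real.
have xb : e^-1 / (- d) <= x by near: x; apply: nbhs_pinfty_ge; exact: num_real.
have x0 : 0 < x by apply: lt_le_trans x1.
have -> : x ^+ 3 * d = - (x ^+ 3 * - d) by rewrite mulrN opprK.
rewrite expRN -[leRHS]invrK lef_pV2 ?posrE ?expR_gt0 ?invr_gt0//.
apply: le_trans (expR_ge1Dx _).
have nd : 0 < - d by rewrite oppr_gt0.
have h1 : e^-1 <= x * - d by rewrite -ler_pdivrMr.
have h2 : x <= x ^+ 3 by rewrite !exprS expr0 mulr1; nra.
have h3 : x * - d <= x ^+ 3 * - d by rewrite ler_pM2r.
lra.
Unshelve. all: end_near. Qed.

Definition Fr (m : nat) (w b : nat -> R) (c : nat) (x : R) :=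
  w c * expR (x ^+ 3 * b c) / \sum_(c' < m.+1) w c' * expR (x ^+ 3 * b c').

Lemma Fr_sum_ge (m : nat) (w b : nat -> R) (cs : nat) x : (cs <= m)%N ->
  (forall c', (c' <= m)%N -> 0 <= w c') ->
  w cs * expR (x ^+ 3 * b cs) <= \sum_(c' < m.+1) w c' * expR (x ^+ 3 * b c').
Proof.
move=> hcs hw; have hcs' : (cs < m.+1)%N by [].
rewrite (bigD1 (Ordinal hcs')) //= lerDl; apply: sumr_ge0 => i _.
by rewrite mulr_ge0 ?expR_ge0 // hw // -ltnS ltn_ord.
Qed.

Lemma Fr01 (m : nat) (w b : nat -> R) c x : (c <= m)%N -> (forall c', (c' <= m)%N -> 0 <= w c') ->
  0 <= Fr m w b c x <= 1.
Proof.
move=> hc hw; have hS := Fr_sum_ge b x hc hw.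
have n0 : 0 <= w c * expR (x ^+ 3 * b c) by rewrite mulr_ge0 ?expR_ge0 ?hw.
apply/andP; split; first by rewrite /Fr divr_ge0 // (le_trans n0).
rewrite /Fr; set S := \sum_(_ < _) _ in hS *.
have [->|Sn0] := eqVneq S 0; first by rewrite invr0 mulr0.
have S0 : 0 < S by rewrite lt_neqAle eq_sym Sn0 (le_trans n0).
by rewrite ler_pdivrMr // mul1r.
Qed.

Lemma lim_good (m : nat) (w b : nat -> R) c : (c <= m)%N -> 0 < w c ->
  (forall c', (c' <= m)%N -> 0 <= w c') -> (forall c', (c' <= m)%N -> b c' <= b c) ->
  Fr m w b c x @[x --> +oo] -->
    w c / \sum_(c' < m.+1) (if b c' == b c then w c' else 0).
Proof.
move=> hc wc hw hb.
have E x : Fr m w b c x = w c / \sum_(c' < m.+1) w c' * expR (x ^+ 3 * (b c' - b c)).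
  rewrite /Fr.
  have -> : \sum_(c' < m.+1) w c' * expR (x ^+ 3 * b c') =
     expR (x ^+ 3 * b c) * \sum_(c' < m.+1) w c' * expR (x ^+ 3 * (b c' - b c)).
    rewrite mulr_sumr; apply: eq_bigr => i _.
    by rewrite mulrCA -expRD mulrBr addrC subrK.
  by rewrite invfM mulrA mulfK // gt_eqF // expR_gt0.
under eq_cvg do rewrite E.
have D0 : \sum_(c' < m.+1) (if b c' == b c then w c' else 0) != 0.
  apply: lt0r_neq0; have hc' : (c < m.+1)%N by [].
  rewrite (bigD1 (Ordinal hc')) //= eqxx; apply: (lt_le_trans wc).
  rewrite lerDl; apply: sumr_ge0 => i _; case: ifP => // _.
  by rewrite hw // -ltnS ltn_ord.
apply: cvgMl_tmp; apply: cvgV => //.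
apply: cvg_sumR => i _.
case: eqP => [->|ne].
  under eq_cvg do rewrite subrr mulr0 expR0 mulr1; exact: cvg_cst.
rewrite -[X in _ --> X](mulr0 (w i)); apply: cvgMl_tmp; apply: exp_decay.
rewrite subr_lt0 lt_neqAle hb; last by rewrite -ltnS ltn_ord.
by rewrite andbT; apply/eqP.
Qed.

Lemma lim_good_neq0 (m : nat) (w b : nat -> R) c : (c <= m)%N -> 0 < w c ->
  (forall c', (c' <= m)%N -> 0 <= w c') ->
  w c / \sum_(c' < m.+1) (if b c' == b c then w c' else 0) != 0.
Proof.
move=> hc wc hw; rewrite mulf_neq0 ?invr_eq0 ?gt_eqF //.
have hc' : (c < m.+1)%N by [].
rewrite (bigD1 (Ordinal hc')) //= eqxx; apply: (lt_le_trans wc).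
rewrite lerDl; apply: sumr_ge0 => i _; case: ifP => // _.
by rewrite hw // -ltnS ltn_ord.
Qed.

Lemma lim_bad (m : nat) (w b : nat -> R) c cs : (c <= m)%N -> (cs <= m)%N -> 0 < w cs ->
  (forall c', (c' <= m)%N -> 0 <= w c') -> b c < b cs ->
  Fr m w b c x @[x --> +oo] --> 0.
Proof.
move=> hc hcs wcs hw hb.
apply: (@squeeze_cvgr _ _ _ _ (fun=> 0) (fun x => w c / w cs * expR (x ^+ 3 * (b c - b cs)))).
- near=> x; have /andP[-> _] := Fr01 b x hc hw; rewrite /=.
  rewrite /Fr; have hS := Fr_sum_ge b x hcs hw.
  have P0 : 0 < w cs * expR (x ^+ 3 * b cs) by rewrite mulr_gt0 ?expR_gt0.
  have n0 : 0 <= w c * expR (x ^+ 3 * b c) by rewrite mulr_ge0 ?expR_ge0 ?hw.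
  apply: le_trans (_ : _ <= w c * expR (x ^+ 3 * b c) / (w cs * expR (x ^+ 3 * b cs))) _.
    by rewrite ler_wpM2l // lef_pV2 // ?posrE // (lt_le_trans P0).
  by rewrite mulrBr expRB invfM mulrACA.
- exact: cvg_cst.
- rewrite -[X in _ --> X](mulr0 (w c / w cs)); apply: cvgMl_tmp; apply: exp_decay.
  by rewrite subr_lt0.
Unshelve. all: end_near.
Qed.
End An.

Section Main.
Import numFieldNormedType.Exports.
Local Open Scope classical_set_scope.
Local Open Scope ring_scope.
Variables (R : realType) (n : nat) (mu : {ffun 'I_n -> 'I_n}) (s : 'I_n -> bool)
  (sigma : {perm 'I_n}) (psi : R) (prb : nat -> seq nat -> nat -> R).

Definition Xc (p : {ffun 'I_n -> 'I_n}) (k : 'I_n) (c : nat) : R :=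
  \sum_(j : 'I_n | (j < k)%N)
     (s (sigma j))%:R * ((alloc_label p sigma j == c) && (mu (sigma j) == mu (sigma k)))%:R.
Definition Yc (p : {ffun 'I_n -> 'I_n}) (k : 'I_n) (c : nat) : R :=
  \sum_(j : 'I_n | (j < k)%N) (s (sigma j))%:R * (alloc_label p sigma j == c)%:R.
Definition beta p k (c : nat) : R :=
  (s (sigma k))%:R / (k%:R ^+ 2) * (Xc p k c ^+ 2 - psi * Yc p k c ^+ 2).

Lemma anchorE p k c (om : R) :
  anchor_factor mu (fun i => om * (s i)%:R) sigma psi p k c = expR (om ^+ 3 * beta p k c).
Proof.
rewrite /anchor_factor /beta /Xc /Yc; congr expR.
rewrite -!(eq_bigr _ (fun j _ => mulrA _ _ _)) -!mulr_sumr.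
set X := \sum_(_ | _) _; set Y := \sum_(_ | _) _.
ring.
Qed.

Lemma spcE p k c (om : R) :
  sp_cond mu (fun i => om * (s i)%:R) sigma psi prb p k c =
  Fr (n_existing p sigma k) (prb k (alloc_prefix p sigma k)) (beta p k) c om.
Proof.
rewrite /sp_cond /Fr anchorE; congr (_ / _); apply: eq_bigr => i _.
by rewrite anchorE.
Qed.

Hypothesis hv : valid_baseline prb sigma.
Hypothesis hpos : forall p : {ffun 'I_n -> 'I_n}, canon_part p -> 0 < baseline_pmf prb sigma p.

Lemma prb_actual_pos p (k : 'I_n) : canon_part p -> (0 < k)%N ->
  0 < prb k (alloc_prefix p sigma k) (alloc_label p sigma k).
Proof.
move=> cp k0; have [h1 _] := hv cp k0.
have ge := h1 _ (AL_le p sigma k).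
rewrite lt_neqAle ge andbT; apply/eqP => e.
have := hpos cp; rewrite /baseline_pmf (bigD1 k) //= -e mul0r ltxx. by [].
Qed.

Definition qfun (p : {ffun 'I_n -> 'I_n}) (k : 'I_n) (v : nat) (x : 'I_n) : nat :=
  let j := (sigma^-1)%g x in
     if (j < k)%N then val (p x) else if j == k then v else (n + j)%N.

Lemma prb_pos_q p (k : 'I_n) (v : nat) : canon_part p -> (0 < k)%N ->
  0 < prb k (alloc_prefix p sigma k) (alloc_label (canonize (qfun p k v)) sigma k).
Proof.
move=> cp k0; set q := qfun p k v.
have K : forall a b : 'I_n, (a < k)%N -> (b < k)%N ->
   (p (sigma a) == p (sigma b)) = (canonize q (sigma a) == canonize q (sigma b)).
  move=> a b ak bk; rewrite canon_kern /q /qfun !permK ak bk.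
  by rewrite val_eqE.
rewrite (AP_pre K); exact: prb_actual_pos (canon_part_canon q) k0.
Qed.

Lemma prb_pos_new p (k : 'I_n) : canon_part p -> (0 < k)%N ->
  0 < prb k (alloc_prefix p sigma k) (n_existing p sigma k).
Proof.
move=> cp k0; have := prb_pos_q (n + k) cp k0.
set q := qfun _ _ _.
have K : forall a b : 'I_n, (a < k)%N -> (b < k)%N ->
   (p (sigma a) == p (sigma b)) = (canonize q (sigma a) == canonize q (sigma b)).
  move=> a b ak bk; rewrite canon_kern /q /qfun !permK ak bk.
  by rewrite val_eqE.
rewrite AL_new; last first.
  move=> j jk; rewrite canon_kern /q /qfun !permK jk ltnn eqxx.
  apply/eqP => e; have := ltn_ord (p (sigma j)); rewrite e.
  by rewrite ltnNge leq_addr.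
by rewrite /n_existing (AP_pre K).
Qed.

Lemma prb_pos_mate p (k j0 : 'I_n) : canon_part p -> (0 < k)%N -> (j0 < k)%N ->
  0 < prb k (alloc_prefix p sigma k) (alloc_label p sigma j0).
Proof.
move=> cp k0 jk; have := prb_pos_q (val (p (sigma j0))) cp k0.
set q := qfun _ _ _.
have K : forall a b : 'I_n, (a < k)%N -> (b < k)%N ->
   (p (sigma a) == p (sigma b)) = (canonize q (sigma a) == canonize q (sigma b)).
  move=> a b ak bk; rewrite canon_kern /q /qfun !permK ak bk.
  by rewrite val_eqE.
have /eqP -> : alloc_label (canonize q) sigma k == alloc_label (canonize q) sigma j0.
  by rewrite AL_eq canon_kern /q /qfun !permK jk ltnn eqxx.
by rewrite -(AL_pre K jk).
Qed.

Definition Cp (p : {ffun 'I_n -> 'I_n}) : bool :=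
  [forall x, forall y, s x ==> s y ==> ((p x == p y) == (mu x == mu y))].

Lemma CpP (p : {ffun 'I_n -> 'I_n}) : reflect (forall x y, s x -> s y -> (p x == p y) = (mu x == mu y)) (Cp p).
Proof.
apply: (iffP forallP) => [h x y sx sy|h x]; first by move: (h x) => /forallP/(_ y); rewrite sx sy => /eqP.
by apply/forallP => y; apply/implyP => sx; apply/implyP => sy; rewrite h.
Qed.

Lemma sum_ge_term (P : pred 'I_n) (F : 'I_n -> R) j0 : P j0 -> (forall j, 0 <= F j) ->
  F j0 <= \sum_(j | P j) F j.
Proof.
move=> Pj hF; rewrite (bigD1 j0) //= lerDl; apply: sumr_ge0 => j _; exact: hF.
Qed.

Lemma term_ge0 (a b : bool) : 0 <= (a%:R : R) * b%:R.
Proof. by rewrite mulr_ge0 ?ler0n. Qed.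

Hypothesis hpsi : 0 < psi < 1.

Lemma good_of_C (p : {ffun 'I_n -> 'I_n}) (k : 'I_n) : Cp p -> forall c', (c' <= n_existing p sigma k)%N ->
  beta p k c' <= beta p k (alloc_label p sigma k).
Proof.
move=> /CpP C c' _; rewrite /beta.
case Sk: (s (sigma k)); last by rewrite !mul0r.
set c0 := alloc_label p sigma k.
have eX0 : Xc p k c0 = Yc p k c0.
  apply: eq_bigr => j jk; case Sj: (s (sigma j)); last by rewrite !mul0r.
  case e: (alloc_label p sigma j == c0) => //=.
  move: e; rewrite AL_eq => e; by rewrite -C // e.
have [->|ne] := eqVneq c' c0; first by [].
have eX' : Xc p k c' = 0.
  apply: big1 => j jk; case Sj: (s (sigma j)); last by rewrite !mul0r.
  case e: (mu (sigma j) == mu (sigma k)); last by rewrite andbF mulr0.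
  move: e; rewrite -C // -AL_eq => /eqP ->; rewrite eq_sym (negbTE ne) /=; by rewrite mulr0.
rewrite eX' eX0; apply: ler_wpM2l; first by rewrite divr_ge0 ?ler0n ?exprn_ge0.
have ps0 : 0 <= psi by case/andP: hpsi => /ltW.
have ps1 : psi <= 1 by case/andP: hpsi => _ /ltW.
have h1 : 0 <= psi * Yc p k c' ^+ 2 by rewrite mulr_ge0 ?sqr_ge0.
have h2 : 0 <= (1 - psi) * Yc p k c0 ^+ 2 by rewrite mulr_ge0 ?sqr_ge0 ?subr_ge0.
rewrite expr2 mul0r; lra.
Qed.

Definition viol (p : {ffun 'I_n -> 'I_n}) (k : 'I_n) := [exists j : 'I_n, [&& (j < k)%N, s (sigma j), s (sigma k) &
   (p (sigma j) == p (sigma k)) != (mu (sigma j) == mu (sigma k))]].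

Lemma bad_of_notC (p : {ffun 'I_n -> 'I_n}) : canon_part p -> ~~ Cp p ->
  exists k : 'I_n, (0 < k)%N /\ exists cs : nat, [/\ (cs <= n_existing p sigma k)%N,
    0 < prb k (alloc_prefix p sigma k) cs & beta p k (alloc_label p sigma k) < beta p k cs].
Proof.
move=> cp; rewrite negb_forall => /existsP[x]; rewrite negb_forall => /existsP[y].
rewrite negb_imply => /andP[sx]; rewrite negb_imply => /andP[sy ne].
set a := (sigma^-1)%g x; set b := (sigma^-1)%g y.
have ea : sigma a = x by rewrite /a permKV.
have eb : sigma b = y by rewrite /b permKV.
have exv : exists m, [exists k : 'I_n, (val k == m) && viol p k].
  case: (ltngtP a b) => h.
  - exists (val b); apply/existsP; exists b; rewrite eqxx /=; apply/existsP; exists a.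
    by rewrite h ea eb sx sy.
  - exists (val a); apply/existsP; exists a; rewrite eqxx /=; apply/existsP; exists b.
    by rewrite h ea eb sx sy /= [p y == _]eq_sym [mu y == _]eq_sym.
  - by move: ne; rewrite -ea -eb (val_inj h) !eqxx.
case: (ex_minnP exv) => m /existsP[k /andP[/eqP km vk]] mmin.
have minv : forall k' : 'I_n, (k' < k)%N -> ~~ viol p k'.
  move=> k' kk; apply/negP => v'.
  suff : (m <= k')%N by rewrite -km leqNgt kk.
  apply: mmin; apply/existsP; exists k'; by rewrite eqxx.
have preC : forall a b : 'I_n, (a < k)%N -> (b < k)%N -> s (sigma a) -> s (sigma b) ->
    (p (sigma a) == p (sigma b)) = (mu (sigma a) == mu (sigma b)).
  move=> a' b' ak bk sa sb; case: (ltngtP a' b') => h.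
  - case: (boolP ((p (sigma a') == p (sigma b')) == (mu (sigma a') == mu (sigma b')))) => [/eqP //|nq].
    case/negP: (minv b' bk); apply/existsP; exists a'.
    by rewrite h sa sb nq.
  - case: (boolP ((p (sigma a') == p (sigma b')) == (mu (sigma a') == mu (sigma b')))) => [/eqP //|nq].
    case/negP: (minv a' ak); apply/existsP; exists b'.
    by rewrite h sa sb /= [p (sigma b') == _]eq_sym [mu (sigma b') == _]eq_sym nq.
  - by rewrite (val_inj h) !eqxx.
case/existsP: vk => j /and4P[jk Sj Sk vj].
have k0 : (0 < k)%N by apply: leq_ltn_trans jk.
exists k; split => //.
have kpos : 0 < (k%:R : R) ^-1 ^+ 2 by rewrite exprn_gt0 // invr_gt0 ltr0n.
have betaE c : beta p k c = (k%:R ^-1 ^+ 2) * (Xc p k c ^+ 2 - psi * Yc p k c ^+ 2).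
  by rewrite /beta Sk mul1r exprVn.
have ps0 : 0 < psi by case/andP: hpsi.
have ps1 : psi < 1 by case/andP: hpsi.
set c0 := alloc_label p sigma k.
case: (boolP [exists j1 : 'I_n, [&& (j1 < k)%N, s (sigma j1) & mu (sigma j1) == mu (sigma k)]]).
- case/existsP => j1 /and3P[j1k Sj1 mj1].
  exists (alloc_label p sigma j1); split.
  + exact/ltnW/AL_lt.
  + exact: prb_pos_mate.
  set cs := alloc_label p sigma j1.
  have eXs : Xc p k cs = Yc p k cs.
    apply: eq_bigr => i ik; case Si: (s (sigma i)); last by rewrite !mul0r.
    case e: (alloc_label p sigma i == cs) => //=.
    move: e; rewrite AL_eq preC // => /eqP ->; by rewrite mj1.
  have Ys : 1 <= Yc p k cs.
    have := @sum_ge_term (fun i : 'I_n => (i < k)%N)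
      (fun i => (s (sigma i))%:R * (alloc_label p sigma i == cs)%:R) j1 j1k (fun i => term_ge0 _ _).
    by rewrite Sj1 eqxx mulr1.
  have ncs : c0 != cs.
    apply/negP; rewrite /c0 /cs AL_eq => /eqP e.
    by move: vj; rewrite e preC // (eqP mj1) eqxx.
  have eX0 : Xc p k c0 = 0.
    apply: big1 => i ik; case Si: (s (sigma i)); last by rewrite !mul0r.
    case e: (mu (sigma i) == mu (sigma k)); last by rewrite andbF mulr0.
    move: e; rewrite -(eqP mj1) -preC // -AL_eq => /eqP e.
    by rewrite e eq_sym (negbTE ncs) mulr0.
  rewrite !betaE ltr_pM2l // eX0 eXs.
  have h1 : 0 <= psi * Yc p k c0 ^+ 2 by rewrite mulr_ge0 ?sqr_ge0 ?ltW.
  have h2 : 1 <= Yc p k cs ^+ 2 by rewrite expr2; nra.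
  rewrite expr2 mul0r; nra.
- rewrite negb_exists => /forallP nomate.
  exists (n_existing p sigma k); split => //.
  + exact: prb_pos_new.
  have eXm : Xc p k (n_existing p sigma k) = 0.
    apply: big1 => i ik; rewrite ltn_eqF ?AL_lt //; by rewrite andFb mulr0.
  have eYm : Yc p k (n_existing p sigma k) = 0.
    apply: big1 => i ik; rewrite ltn_eqF ?AL_lt //; by rewrite mulr0.
  have eX0 : Xc p k c0 = 0.
    apply: big1 => i ik; case Si: (s (sigma i)); last by rewrite !mul0r.
    move: (nomate i); rewrite ik Si /= => /negbTE ->; by rewrite andbF mulr0.
  have Y0 : 1 <= Yc p k c0.
    have mj : (mu (sigma j) == mu (sigma k)) = false.
      by move: (nomate j); rewrite jk Sj /= => /negbTE.
    have pj : alloc_label p sigma j == c0 by rewrite AL_eq; move: vj; rewrite mj; case: (p (sigma j) == _).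
    have := @sum_ge_term (fun i : 'I_n => (i < k)%N)
      (fun i => (s (sigma i))%:R * (alloc_label p sigma i == c0)%:R) j jk (fun i => term_ge0 _ _).
    by rewrite Sj pj mulr1.
  rewrite !betaE ltr_pM2l // eX0 eXm eYm.
  have h2 : 1 <= Yc p k c0 ^+ 2 by rewrite expr2; nra.
  rewrite expr2 !mul0r mulr0; nra.
Qed.

Lemma sp_pmfE (p : {ffun 'I_n -> 'I_n}) (om : R) :
  sp_pmf mu (fun i => om * (s i)%:R) sigma psi prb p =
  \prod_(k : 'I_n | (0 < k)%N)
     Fr (n_existing p sigma k) (prb k (alloc_prefix p sigma k)) (beta p k) (alloc_label p sigma k) om.
Proof. by apply: eq_bigr => k _; rewrite spcE. Qed.

Lemma limiting_iff (p : {ffun 'I_n -> 'I_n}) : canon_part p ->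
  (limiting mu s sigma psi prb p <-> Cp p).
Proof.
move=> cp; split; last first.
  move=> C; rewrite /limiting.
  exists (\prod_(k : 'I_n | (0 < k)%N)
    (prb k (alloc_prefix p sigma k) (alloc_label p sigma k) /
      \sum_(c' < (n_existing p sigma k).+1)
        (if beta p k c' == beta p k (alloc_label p sigma k)
         then prb k (alloc_prefix p sigma k) c' else 0))); split.
    apply/prodf_neq0 => k k0; apply: lim_good_neq0.
    - exact: AL_le.
    - exact: prb_actual_pos.
    - by move=> c' hc'; case: (hv cp k0) => h _; apply: h.
  under eq_cvg do rewrite sp_pmfE.
  apply: cvg_prodR => k k0; apply: lim_good.
  - exact: AL_le.
  - exact: prb_actual_pos.
  - by move=> c' hc'; case: (hv cp k0) => h _; apply: h.
  - by move=> c' hc'; apply: good_of_C.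
case=> l [l0 hl]; apply/negPn/negP => nC.
have [k [k0 [cs [hcs pcs blt]]]] := bad_of_notC cp nC.
have h0 : sp_pmf mu (fun i => om * (s i)%:R) sigma psi prb p @[om --> +oo] --> (0 : R).
  under eq_cvg do rewrite sp_pmfE.
  have hw : forall k : 'I_n, (0 < k)%N -> forall c', (c' <= n_existing p sigma k)%N ->
      0 <= prb k (alloc_prefix p sigma k) c'.
    by move=> k' k'0 c' hc'; case: (hv cp k'0) => h _; apply: h.
  apply: (@squeeze_cvgr _ _ _ _ (fun=> 0)
    (fun om => Fr (n_existing p sigma k) (prb k (alloc_prefix p sigma k)) (beta p k)
                  (alloc_label p sigma k) om)).
  - near=> om; apply/andP; split.
      apply: prodr_ge0 => i i0; have /andP[] := Fr01 (beta p i) om (AL_le p sigma i) (hw i i0) => //.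
    rewrite (bigD1 k) //=; apply: ler_piMr.
      by have /andP[] := Fr01 (beta p k) om (AL_le p sigma k) (hw k k0).
    apply: prodr_ile1 => i /andP[i0 _]; exact: Fr01 (AL_le p sigma i) (hw i i0).
  - exact: cvg_cst.
  - apply: (lim_bad (cs := cs)) => //.
    + exact: AL_le.
    + exact: hw.
have e1 := cvg_lim (@norm_hausdorff _ _) hl.
have e2 := cvg_lim (@norm_hausdorff _ _) h0.
by move: l0; rewrite -e1 e2 eqxx.
Unshelve. all: end_near.
Qed.
End Main.
Lemma card_imset_undup n (mu : {ffun 'I_n -> 'I_n}) (s : 'I_n -> bool) :
  #|[set mu i | i in [set i : 'I_n | s i]]| = size (undup (cls (fun i => val (mu i)) s)).
Proof.
have -> : cls (fun i => val (mu i)) s = map val [seq mu i | i <- enum 'I_n & s i].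
  by rewrite /cls -map_comp.
have -> : size (undup (map val [seq mu i | i <- enum 'I_n & s i])) =
          size (undup [seq mu i | i <- enum 'I_n & s i]).
  by rewrite undup_map_inj ?size_map //; exact: val_inj.
rewrite cardE; apply: perm_size; apply: uniq_perm; rewrite ?enum_uniq ?undup_uniq //.
move=> x; rewrite mem_enum mem_undup; apply/imsetP/mapP => -[i].
  by rewrite inE => si ->; exists i; rewrite // mem_filter si mem_enum.
by rewrite mem_filter mem_enum andbT => si ->; exists i; rewrite ?inE.
Qed.


Unset Implicit Arguments. Set Strict Implicit. Set Printing Implicit Defensive.
Local Open Scope ring_scope.

Theorem theorem6 (R : realType) (n : nat) (mu : {ffun 'I_n -> 'I_n})
  (s : 'I_n -> bool) (sigma : {perm 'I_n}) (psi : R)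
  (prb : nat -> seq nat -> nat -> R) :
  canon_part mu ->
  valid_baseline prb sigma ->
  (forall p : {ffun 'I_n -> 'I_n}, canon_part p -> 0 < baseline_pmf prb sigma p) ->
  0 < psi < 1 ->
  let a := #|[set i : 'I_n | ~~ s i]| in
  let b := #|[set mu i | i in [set i : 'I_n | s i]]| in
  #|[set p : {ffun 'I_n -> 'I_n} | canon_part p && `[< limiting mu s sigma psi prb p >]]|
    = ext_bell a b.
Proof.
move=> _ hv hp hpsi a b.
have -> : [set p : {ffun 'I_n -> 'I_n} | canon_part p && `[< limiting mu s sigma psi prb p >]]
    = Cset (fun i => val (mu i)) s.
  apply/setP => p; rewrite !inE; case cp: (canon_part p) => //=.
  apply/asboolP/idP.
    move/(limiting_iff mu s hv hp hpsi cp) => /CpP C; apply/CCP => x y sx sy.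
    by rewrite C // val_eqE.
  move=> /CCP C; apply/(limiting_iff mu s hv hp hpsi cp); apply/CpP => x y sx sy.
  by rewrite C // val_eqE.
by rewrite (count_main (a := a)) // /b card_imset_undup.
Qed.
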